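(* Let $T\in\mathcal{L}(\mathcal{H})$ have closed range and let $n\ge1$ be such that $T^n$ has closed range. (1) If $T^n$ is EP, then $T$ is $n$-EP. (2) If $T$ is SD, then $T$ is $n$-EP if and only if $T^n$ is EP.
   Context: $\mathcal{H}$ is a Hilbert space, $\mathcal{L}(\mathcal{H})$ the bounded operators on it. For $A$ with closed range, $A^\dagger$ is its Moore–Penrose inverse (unique solution of $AA^\dagger A=A$, $A^\dagger AA^\dagger=A^\dagger$, $(A^\dagger A)^*=A^\dagger A$, $(AA^\dagger)^*=AA^\dagger$). $A$ is EP if it has closed range and $R(A)=R(A^* )$ (equivalently $AA^\dagger=A^\dagger A$). $T$ is SD if it has closed range and $T^*T^\dagger=T^\dagger T^*$. For $n\ge1$, $T$ is $n$-EP if $T$ has closed range and $T^nT^\dagger=T^\dagger T^n$. *)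

(* Defs.v *)
From HB Require Import structures.
From mathcomp Require Import all_boot all_order all_algebra.
From mathcomp Require Import all_classical all_reals all_analysis.
From mathcomp Require Import complex.
Set Implicit Arguments. Unset Strict Implicit. Unset Printing Implicit Defensive.
Import Order.TTheory GRing.Theory Num.Theory.
Import numFieldNormedType.Exports.
Local Open Scope classical_set_scope.
Local Open Scope ring_scope.
Local Open Scope complex_scope.

Section Hilbert.
Variable R : realType.
Notation C := R[i].

(* [ip] is an inner product on the complex normed space H inducing its norm:
   linear in the first argument, conjugate symmetric, and <x,x> = |x|^2.
   Together with completeness of H this makes H a complex Hilbert space. *)
Definition is_inner_product (H : normedModType C) (ip : H -> H -> C) : Prop :=
  [/\ forall (a : C) (x y z : H), ip (a *: x + y) z = a * ip x z + ip y z,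
      forall x y : H, ip y x = Num.conj (ip x y)
    & forall x : H, ip x x = `|x| ^+ 2].

Definition bounded_op (H : normedModType C) (A : H -> H) : Prop :=
  [/\ forall x y : H, A (x + y) = A x + A y,
      forall (a : C) (x : H), A (a *: x) = a *: A x
    & continuous A].

Definition closed_range (H : normedModType C) (A : H -> H) : Prop :=
  closed (range A).

Definition is_adjoint (H : normedModType C) (ip : H -> H -> C) (A B : H -> H) : Prop :=
  bounded_op B /\ forall x y : H, ip (A x) y = ip x (B y).

Definition self_adjoint (H : normedModType C) (ip : H -> H -> C) (S : H -> H) : Prop :=
  forall x y : H, ip (S x) y = ip x (S y).

Definition is_MP_inverse (H : normedModType C) (ip : H -> H -> C) (A X : H -> H) : Prop :=
  [/\ bounded_op X,
      A \o X \o A = A,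
      X \o A \o X = X,
      self_adjoint ip (X \o A)
    & self_adjoint ip (A \o X)].

Definition EP (H : normedModType C) (ip : H -> H -> C) (A : H -> H) : Prop :=
  closed_range A /\ forall B, is_adjoint ip A B -> range A = range B.

Definition SD (H : normedModType C) (ip : H -> H -> C) (T : H -> H) : Prop :=
  closed_range T /\ forall Ts Td, is_adjoint ip T Ts -> is_MP_inverse ip T Td ->
    Ts \o Td = Td \o Ts.

Definition nEP (H : normedModType C) (ip : H -> H -> C) (n : nat) (T : H -> H) : Prop :=
  closed_range T /\ forall Td, is_MP_inverse ip T Td ->
    iter n T \o Td = Td \o iter n T.

End Hilbert.

(* Main.v *)
Require Import Defs.
From HB Require Import structures.
From mathcomp Require Import all_boot all_order all_algebra.
From mathcomp Require Import all_classical all_reals all_analysis.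
From mathcomp Require Import complex.
From mathcomp Require Import ring lra.
Import Order.TTheory GRing.Theory Num.Theory.
Import numFieldNormedType.Exports.
Local Open Scope classical_set_scope.
Local Open Scope ring_scope.
Set Implicit Arguments. Unset Strict Implicit. Unset Printing Implicit Defensive.
Local Open Scope complex_scope.
Section Topo.
Variable K : numFieldType.
Variable V : normedModType K.

Lemma closed_approx (S : set V) l : closed S ->
  (forall e : K, 0 < e -> exists s, S s /\ `|l - s| < e) -> S l.
Proof.
move=> cS h; apply: cS => B /nbhs_normP [e /= e0 hB].
have [s [Ss hs]] := h e e0.
by exists s; split => //; apply: hB.
Qed.

Lemma closedP (S : set V) :
  (forall l, (forall e : K, 0 < e -> exists s, S s /\ `|l - s| < e) -> S l) ->
  closed S.
Proof.
move=> h l cl; apply: h => e e0.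
have : nbhs l (ball_ Num.Def.normr l e) by apply/nbhs_normP; exists e.
by move/cl => [s [Ss bs]]; exists s.
Qed.
End Topo.

Section Topo2.
Variable K : numFieldType.
Variable V : completeNormedModType K.
Lemma cauchy_seq (u : nat -> V) :
  (forall e : K, 0 < e -> exists N, forall n, (N <= n)%N -> `|u N - u n| < e) ->
  exists l, forall e : K, 0 < e -> exists N, forall n, (N <= n)%N -> `|l - u n| < e.
Proof.
move=> h.
have : cvg (u n @[n --> \oo]).
  apply: cauchy_cvg; apply: cauchy_exP => e e0.
  have [N hN] := h e e0.
  exists (u N); exists N => // n /= Nn.
  by rewrite -ball_normE /=; exact: hN.
move=> /cvgrPdist_lt hl; exists (lim (u n @[n --> \oo])) => e e0.
by have [N _ hN] := hl e e0; exists N.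
Qed.
End Topo2.
Section Cont.
Variable K : numFieldType.
Variables V W : normedModType K.

Lemma addf0 (f : V -> W) : (forall x y, f (x + y) = f x + f y) -> f 0 = 0.
Proof. by move=> fD; have := fD 0 0; rewrite addr0 -{1}[f 0]addr0 => /addrI <-. Qed.

Lemma addfB (f : V -> W) : (forall x y, f (x + y) = f x + f y) ->
  forall x y, f (x - y) = f x - f y.
Proof. by move=> fD x y; apply/eqP; rewrite eq_sym subr_eq -fD subrK. Qed.

Lemma bound_cont (f : V -> W) (M : K) : 0 < M ->
  (forall x y, f (x + y) = f x + f y) ->
  (forall x, `|f x| <= M * `|x|) -> continuous f.
Proof.
move=> M0 fD hM x; apply/cvgrPdist_lt => e e0; apply/nbhs_normP.
exists (e / M); first exact: divr_gt0.
move=> y /= hy; rewrite -addfB //; apply: (le_lt_trans (hM _)).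
by rewrite -ltr_pdivlMl // mulrC.
Qed.

Lemma cont_bound (f : V -> W) :
  (forall x y, f (x + y) = f x + f y) ->
  (forall (a : K) x, f (a *: x) = a *: f x) -> continuous f ->
  exists M : K, 0 < M /\ forall x, `|f x| <= M * `|x|.
Proof.
move=> fD fZ fc.
have /cvgrPdist_lt/(_ 1 ltr01)/nbhs_normP [d /= d0 hd] := fc 0.
have f0 := addf0 fD.
exists (2 / d); split; first exact: divr_gt0.
move=> x; have [->|x0] := eqVneq x 0; first by rewrite (addf0 fD) !normr0 mulr0.
have nx : 0 < `|x| by rewrite normr_gt0.
set t := d / (2 * `|x|).
have t0 : 0 < t by rewrite divr_gt0 // mulr_gt0.
have tx : t * `|x| = d / 2 by rewrite /t; field; rewrite lt0r_neq0.
have e1 : t * (2 / d * `|x|) = 1 by rewrite /t; field; rewrite !lt0r_neq0.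
clearbody t.
have := hd (t *: x); rewrite /= f0 !sub0r !normrN fZ !normrZ (gtr0_norm t0) tx.
move=> /(_ _) h; rewrite -(ler_pM2l t0) e1 ltW // h //.
by rewrite ltr_pdivrMr // ltr_pMr // ltr1n.
Qed.
End Cont.
Section IP.
Variable R : realType.
Local Notation C := R[i].
Variable H : completeNormedModType C.
Variable ip : H -> H -> C.
Hypothesis hip : is_inner_product ip.

Lemma ipl a x y z : ip (a *: x + y) z = a * ip x z + ip y z.
Proof. by case: hip. Qed.
Lemma ipc x y : ip y x = Num.conj (ip x y).
Proof. by case: hip. Qed.
Lemma ipn x : ip x x = `|x| ^+ 2.
Proof. by case: hip. Qed.

Lemma ip0l z : ip 0 z = 0.
Proof.
have := ipl 1 0 0 z; rewrite scaler0 addr0 mul1r.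
by rewrite -{1}[ip 0 z]addr0 => /addrI ->.
Qed.
Lemma ipDl x y z : ip (x + y) z = ip x z + ip y z.
Proof. by rewrite -[x in LHS]scale1r ipl mul1r. Qed.
Lemma ipZl a x z : ip (a *: x) z = a * ip x z.
Proof. by rewrite -[a *: x]addr0 ipl ip0l addr0. Qed.
Lemma ipNl x z : ip (- x) z = - ip x z.
Proof. by rewrite -scaleN1r ipZl mulN1r. Qed.
Lemma ipBl x y z : ip (x - y) z = ip x z - ip y z.
Proof. by rewrite ipDl ipNl. Qed.
Lemma ip0r z : ip z 0 = 0.
Proof. by rewrite ipc ip0l conjC0. Qed.
Lemma ipDr x y z : ip z (x + y) = ip z x + ip z y.
Proof. by rewrite [ip z x]ipc [ip z y]ipc [LHS]ipc ipDl rmorphD. Qed.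
Lemma ipZr a x z : ip z (a *: x) = Num.conj a * ip z x.
Proof. by rewrite [ip z x]ipc [LHS]ipc ipZl rmorphM. Qed.
Lemma ipNr x z : ip z (- x) = - ip z x.
Proof. by rewrite [ip z x]ipc [LHS]ipc ipNl rmorphN. Qed.
Lemma ipBr x y z : ip z (x - y) = ip z x - ip z y.
Proof. by rewrite ipDr ipNr. Qed.

Lemma ipxx_eq0 x : ip x x = 0 -> x = 0.
Proof. by rewrite ipn => /eqP; rewrite expf_eq0 /= normr_eq0 => /eqP. Qed.

Lemma nondeg u v : (forall x, ip x u = ip x v) -> u = v.
Proof.
move=> h; apply/eqP; rewrite -subr_eq0; apply/eqP/ipxx_eq0.
by rewrite ipBr h subrr.
Qed.
Lemma nondegl u v : (forall x, ip u x = ip v x) -> u = v.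
Proof. by move=> h; apply: nondeg => x; rewrite [LHS]ipc [RHS]ipc h. Qed.

Lemma ipxx_ge0 x : 0 <= ip x x.
Proof. by rewrite ipn exprn_ge0. Qed.

Lemma ip_key x y : y != 0 ->
  ip (x - (ip x y / `|y| ^+ 2) *: y) (x - (ip x y / `|y| ^+ 2) *: y) =
  `|x| ^+ 2 - `|ip x y| ^+ 2 / `|y| ^+ 2.
Proof.
move=> y0.
set n := `|y| ^+ 2.
have n0 : n != 0 by rewrite /n expf_eq0 /= normr_eq0.
have n_ge0 : 0 <= n by rewrite /n exprn_ge0.
set a := ip x y.
set b := Num.conj a.
set c := a / n.
have cc : Num.conj c = b / n.
  by rewrite /c fmorph_div /= (geC0_conj n_ge0).
have yx : ip y x = b by rewrite ipc.
rewrite ipBl !ipBr !ipZl !ipZr cc yx (ipn x) (ipn y) -/n normCK -/b -/a /c.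
by field.
Qed.

Lemma CS x y : `|ip x y| <= `|x| * `|y|.
Proof.
have [->|y0] := eqVneq y 0; first by rewrite ip0r normr0 normr0 mulr0.
have n0 : `|y| ^+ 2 != 0 by rewrite expf_eq0 /= normr_eq0.
have := ipxx_ge0 (x - (ip x y / `|y| ^+ 2) *: y); rewrite ip_key // subr_ge0.
rewrite ler_pdivrMr; last by rewrite lt_def n0 exprn_ge0.
rewrite -exprMn.
by rewrite ler_pXn2r // ?nnegrE // mulr_ge0.
Qed.

Definition nR (v : H) : R := complex.Re `|v|.
Lemma normE v : `|v| = (nR v)%:C.
Proof. by rewrite RRe_real // normr_real. Qed.
Lemma normE' v : complex_real_complex_def__canonical__GRing_RMorphism R (nR v) = `|v|.
Proof. by rewrite [RHS]normE. Qed.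
Lemma nR_ge0 v : 0 <= nR v.
Proof. by rewrite -lecR -normE; exact: normr_ge0. Qed.
Lemma nR_tri a b : nR (a + b) <= nR a + nR b.
Proof. by rewrite -lecR rmorphD /= -!normE ler_normD. Qed.
Lemma nR_sym a b : nR (a - b) = nR (b - a).
Proof. by rewrite /nR distrC. Qed.
Lemma nR_par a b :
  nR (a + b) ^+ 2 + nR (a - b) ^+ 2 = 2 * nR a ^+ 2 + 2 * nR b ^+ 2.
Proof.
apply: complexI; rewrite !rmorphD !rmorphM !normE' rmorph_nat -!expr2.
rewrite -!ipn !ipDl !ipDr !ipNl !ipNr; ring.
Qed.
Lemma nRZ (c : C) v : nR (c *: v) = complex.Re `|c| * nR v.
Proof.
apply: complexI; rewrite rmorphM /= -normE RRe_real ?normr_real //.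
by rewrite normrZ normE.
Qed.
Lemma nR0 : nR 0 = 0.
Proof. by rewrite /nR normr0. Qed.
Lemma nR_eq0 v : nR v = 0 -> v = 0.
Proof. by move=> h; apply/eqP; rewrite -normr_eq0 normE h. Qed.

Definition subsp (S : set H) := [/\ closed S, S 0,
  (forall a b, S a -> S b -> S (a + b)) & (forall (c : C) a, S a -> S (c *: a))].

Lemma nR2 v : nR (2 *: v) = 2 * nR v.
Proof. by rewrite nRZ normr_nat. Qed.

Lemma Cpos (e : C) : 0 < e -> exists er : R, 0 < er /\ e = er%:C.
Proof.
move=> e0; exists (complex.Re e); rewrite RRe_real ?gtr0_real //; split => //.
by rewrite -ltcR RRe_real ?gtr0_real.
Qed.

Lemma proj_ex (S : set H) : subsp S ->
  forall x, exists p, S p /\ forall s, S s -> ip (x - p) s = 0.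
Proof.
case=> cS S0 SD SZ x.
pose D := [set nR (x - s) | s in S].
have hD : has_inf D.
  split; first by exists (nR (x - 0)); exists 0.
  by exists 0 => r [s _ <-]; exact: nR_ge0.
set d := inf D.
have dle s : S s -> d <= nR (x - s).
  by move=> Ss; apply: (ge_inf hD.2); exists s.
have d0 : 0 <= d.
  by apply: lb_le_inf; [exact: hD.1 | move=> r [s _ <-]; exact: nR_ge0].
have : forall k : nat, exists s, S s /\ nR (x - s) < d + k.+1%:R^-1.
  move=> k; have e0 : 0 < k.+1%:R^-1 :> R by rewrite invr_gt0 ltr0Sn.
  by have [r [s Ss <-] hr] := inf_adherent e0 hD; exists s.
move=> /choice [u hu].
have mid s s' : S s -> S s' -> 2 * d <= nR ((x - s) + (x - s')).
  move=> Ss Ss'.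
  have -> : (x - s) + (x - s') = 2 *: (x - 2^-1 *: (s + s')).
    rewrite scalerBr scalerA mulfV ?pnatr_eq0 // scale1r scaler_nat mulr2n.
    by rewrite opprD addrACA.
  rewrite nR2 ler_pM2l ?ltr0Sn //; apply: dle.
  by apply: SZ; apply: SD.
have cau m n : nR (u m - u n) ^+ 2 <=
    2 * nR (x - u m) ^+ 2 + 2 * nR (x - u n) ^+ 2 - 4 * d ^+ 2.
  have h1 := nR_par (x - u m) (x - u n).
  have h2 : (x - u m) - (x - u n) = u n - u m.
    by rewrite opprB addrC addrA subrK.
  have h3 := mid _ _ (hu m).1 (hu n).1.
  rewrite h2 (nR_sym (u n)) in h1.
  have h4 : 4 * d ^+ 2 <= nR (x - u m + (x - u n)) ^+ 2.
    have -> : 4 * d ^+ 2 = (2 * d) ^+ 2 by rewrite exprMn; congr (_ * _); rewrite expr2 -natrM.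
    by rewrite ler_pXn2r // ?nnegrE ?mulr_ge0 ?nR_ge0.
  lra.
have hcau : forall e : C, 0 < e ->
    exists N, forall n, (N <= n)%N -> `|u N - u n| < e.
  move=> e /Cpos [er [er0 ->]].
  have K0 : 0 <= 4 * (2 * d + 1) / er ^+ 2.
    have : 0 < er ^+ 2 by rewrite exprn_gt0.
    by move=> ?; apply: divr_ge0; lra.
  have hN := archi_boundP K0.
  set N := Num.Def.archi_bound _ in hN.
  exists N => n Nn.
  rewrite normE ltcR.
  have hu1 := (hu N).2; have hu2 := (hu n).2.
  set M : R := N.+1%:R.
  have M0 : 0 < M by rewrite ltr0Sn.
  have hM : 4 * (2 * d + 1) < er ^+ 2 * M.
    rewrite -ltr_pdivrMl ?exprn_gt0 // mulrC; apply: (lt_le_trans hN).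
    by rewrite /M ler_nat.
  set eta := M^-1.
  have eM : eta * M = 1 by rewrite mulVf // lt0r_neq0.
  have eta0 : 0 < eta by rewrite invr_gt0.
  have eta1 : eta <= 1 by rewrite invr_le1 ?unitfE ?lt0r_neq0 // /M ler1n.
  rewrite -/M -/eta in hu1.
  have hB : nR (x - u n) < d + eta.
    apply: (lt_le_trans hu2); rewrite lerD2l lef_pV2 ?posrE ?ltr0Sn //.
    by rewrite /M ler_nat ltnS.
  have hc := cau N n.
  have a0 := nR_ge0 (u N - u n); have b0 := nR_ge0 (x - u N).
  have c0 := nR_ge0 (x - u n).
  have s1 : nR (x - u N) ^+ 2 < (d + eta) ^+ 2.
    by rewrite ltr_pXn2r // ?nnegrE // addr_ge0 // ltW.
  have s2 : nR (x - u n) ^+ 2 < (d + eta) ^+ 2.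
    by rewrite ltr_pXn2r // ?nnegrE // addr_ge0 // ltW.
  have s0 : eta ^+ 2 <= eta by rewrite expr2 ger_pMl.
  have s3 : nR (u N - u n) ^+ 2 < 4 * (2 * d + 1) * eta.
    rewrite !expr2 in s1 s2 s0 hc *. nra.
  have s4 : 4 * (2 * d + 1) * eta < er ^+ 2.
    nra.
  have s5 : nR (u N - u n) ^+ 2 < er ^+ 2 by lra.
  nra.
have [p hp] := cauchy_seq hcau.
have Sp : S p.
  apply: closed_approx cS _ => e e0; have [N hN] := hp e e0.
  by exists (u N); split; [exact: (hu N).1 | exact: hN].
have pmin : nR (x - p) <= d.
  apply/ler_addgt0Pr => eps eps0.
  have e2 : 0 < (eps / 2)%:C.
    by move: (ltcR 0 (eps / 2)); rewrite divr_gt0 // => h; exact: h.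
  have [N hN] := hp _ e2.
  have b0 : 0 <= 2 / eps by rewrite divr_ge0 // ltW.
  have hk := archi_boundP b0.
  set k := (N + Num.Def.archi_bound (2 / eps))%N.
  have hk1 : nR (x - u k) < d + k.+1%:R^-1 := (hu k).2.
  have hk2 : nR (p - u k) < eps / 2.
    by rewrite -ltcR -normE; apply: hN; rewrite /k leq_addr.
  have hk3 : k.+1%:R^-1 < eps / 2.
    rewrite -(invf_div 2 eps) ltf_pV2 ?posrE ?ltr0Sn ?divr_gt0 //.
    apply: (lt_le_trans hk); rewrite ler_nat /k; apply: leqW; exact: leq_addl.
  have tri : nR (x - p) <= nR (x - u k) + nR (u k - p).
    by apply: le_trans (nR_tri _ _); rewrite addrA subrK.
  rewrite (nR_sym (u k)) in tri.
  move: hk1 hk2 hk3 tri; set t := k.+1%:R^-1; move: t => t; clear; lra.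
have pmin' s : S s -> nR (x - p) <= nR (x - s).
  by move=> Ss; apply: le_trans pmin (dle s Ss).
exists p; split => // s Ss.
have [->|s0] := eqVneq s 0; first exact: ip0r.
set w := x - p; set a := ip w s.
have hm := pmin' (p + (a / `|s| ^+ 2) *: s) (SD _ _ Sp (SZ _ _ Ss)).
have e : x - (p + (a / `|s| ^+ 2) *: s) = w - (a / `|s| ^+ 2) *: s.
  by rewrite opprD addrA.
rewrite e in hm.
have : `|w| ^+ 2 <= `|w - (a / `|s| ^+ 2) *: s| ^+ 2.
  rewrite ler_pXn2r ?nnegrE ?normr_ge0 // (normE w) (normE (w - _)) lecR //.
rewrite -(ipn (w - _)) /a ip_key // -/a => h.
have h2 : `|a| ^+ 2 / `|s| ^+ 2 <= 0.
  by move: h; rewrite -subr_ge0 addrAC subrr add0r oppr_ge0.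
have h3 : 0 <= `|a| ^+ 2 / `|s| ^+ 2 by rewrite divr_ge0 // exprn_ge0.
have : `|a| ^+ 2 / `|s| ^+ 2 = 0 by apply/le_anti; rewrite h2 h3.
move/eqP; rewrite mulf_eq0 invr_eq0 !expf_eq0 /= !normr_eq0 (negbTE s0) orbF.
by move/eqP.
Qed.

Lemma riesz (f : H -> C) (M : C) : 0 < M ->
  (forall x y, f (x + y) = f x + f y) ->
  (forall (c : C) x, f (c *: x) = c * f x) ->
  (forall x, `|f x| <= M * `|x|) ->
  exists z, forall x, f x = ip x z.
Proof.
move=> M0 fD fZ fM.
have f0 : f 0 = 0 by have := fD 0 0; rewrite addr0 -{1}[f 0]addr0 => /addrI <-.
have fB x y : f (x - y) = f x - f y.
  by apply/eqP; rewrite eq_sym subr_eq -fD subrK.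
have [hall|] := pselect (forall x, f x = 0).
  by exists 0 => x; rewrite hall ip0r.
move=> /existsNP [x0 fx0].
pose S := [set x | f x = 0].
have sS : subsp S.
  split; rewrite /S /=.
  - apply: closedP => l hl; apply/eqP/negPn/negP => fl.
    have e0 : 0 < `|f l| / M by rewrite divr_gt0 // normr_gt0.
    have [s [fs ls]] := hl _ e0.
    have : `|f l| < `|f l| .
      rewrite -{1}[f l]subr0 -fs -fB; apply: (le_lt_trans (fM _)).
      by rewrite -ltr_pdivlMl // mulrC.
    by rewrite ltxx.
  - exact: f0.
  - by move=> a b fa fb; rewrite fD fa fb addr0.
  - by move=> c a fa; rewrite fZ fa mulr0.
have [p [Sp hp]] := proj_ex sS x0.
set v := x0 - p.
have fv : f v = f x0 by rewrite /v fB Sp subr0.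
have v0 : v != 0 by apply: contra_not_neq fx0 => v0; rewrite -fv v0 f0.
have vv0 : ip v v != 0 by apply: contra v0 => /eqP /ipxx_eq0 ->.
exists (Num.conj (f v / ip v v) *: v) => x.
rewrite ipZr conjCK.
have Sy : S (f x *: v - f v *: x).
  by rewrite /S /= fB !fZ mulrC subrr.
have := hp _ Sy; rewrite -/v ipc ipBl !ipZl => /eqP.
rewrite conjC_eq0 subr_eq0 => /eqP h.
apply: (mulIf vv0); rewrite h; field.
exact: vv0.
Qed.

Lemma adj_ex A : bounded_op A -> exists B, is_adjoint ip A B.
Proof.
case=> AD AZ Ac.
have [MA [MA0 hMA]] := cont_bound AD AZ Ac.
have hz y : exists z, forall x, ip (A x) y = ip x z.
  have y1 : 0 < `|y| + 1 by rewrite ltr_wpDl.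
  apply: (@riesz _ (MA * (`|y| + 1))).
  - by rewrite mulr_gt0.
  - by move=> x1 x2; rewrite AD ipDl.
  - by move=> c x; rewrite AZ ipZl.
  - move=> x; apply: (le_trans (CS _ _)).
    apply: (le_trans (ler_wpM2r (normr_ge0 _) (hMA x))).
    rewrite mulrAC; apply: ler_wpM2r => //; apply: ler_wpM2l; first exact: ltW.
    by rewrite lerDl.
have [B hB] := choice hz.
have BD y1 y2 : B (y1 + y2) = B y1 + B y2.
  by apply: nondeg => x; rewrite ipDr -!hB ipDr.
have BZ (c : C) y : B (c *: y) = c *: B y.
  by apply: nondeg => x; rewrite !ipZr -!hB ipZr.
have Bb y : `|B y| <= MA * `|y|.
  have h : `|B y| * `|B y| <= `|B y| * (MA * `|y|).
    rewrite -expr2 -ipn -hB.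
    have r : ip (A (B y)) y \is Num.real by rewrite hB ger0_real // ipxx_ge0.
    apply: (le_trans (real_ler_norm r)); apply: (le_trans (CS _ _)).
    rewrite mulrA; apply: ler_wpM2r => //; rewrite mulrC; exact: hMA.
  have [->|By0] := eqVneq (B y) 0; first by rewrite normr0 mulr_ge0 // ltW.
  by rewrite ler_pM2l ?normr_gt0 in h.
exists B; split; last by move=> x y; exact: hB.
split => //; exact: (bound_cont MA0 BD Bb).
Qed.

Lemma open_out (F : set H) y : closed F -> ~ F y ->
  exists s : R, 0 < s /\ forall z, nR (y - z) < s -> ~ F z.
Proof.
move=> cF ny; apply: contrapT => hn; apply: ny.
apply: closed_approx cF _ => e /Cpos [er [er0 ->]].
move/forallNP: hn => /(_ er) /not_andP [] // /existsNP [z /not_implyP [hz /contrapT Fz]].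
by exists z; split => //; rewrite normE ltcR.
Qed.

Lemma baire (F : nat -> set H) : (forall k, closed (F k)) ->
  (forall x, exists k, F k x) ->
  exists k x0 (r : R), 0 < r /\ forall y, nR (x0 - y) < r -> F k y.
Proof.
move=> cF cov; apply: contrapT => hn.
have hn' k x0 r : 0 < r -> exists y, nR (x0 - y) < r /\ ~ F k y.
  move=> r0; apply: contrapT => h; apply: hn; exists k, x0, r; split => // y hy.
  by apply: contrapT => Fy; apply: h; exists y.
have stepex (p : nat * (H * R)) : exists q : H * R,
   0 < p.2.2 -> [/\ 0 < q.2, q.2 <= p.1.+1%:R^-1, nR (p.2.1 - q.1) + q.2 <= p.2.2 &
                 forall z, nR (q.1 - z) <= q.2 -> ~ F p.1 z].
  case: p => k [a r] /=.
  case: (pselect (0 < r)) => r0; last by exists (a, r).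
  have r2 : 0 < r / 2 by rewrite divr_gt0.
  have [y [hy ny]] := hn' k a (r / 2) r2.
  have [s [s0 hs]] := open_out (cF k) ny.
  set m := Num.min (Num.min s r) k.+1%:R^-1.
  have m0 : 0 < m by rewrite !lt_min s0 r0 invr_gt0 ltr0Sn.
  have m1 : m <= s by rewrite !ge_min lexx.
  have m2 : m <= r by rewrite !ge_min lexx orbT.
  have m3 : m <= k.+1%:R^-1 by rewrite ge_min lexx orbT.
  exists (y, m / 2) => _ /=; split.
  - by rewrite divr_gt0.
  - move: m3 m0; clear; set t := k.+1%:R^-1; move: t => t; lra.
  - lra.
  - by move=> z hz; apply: hs; lra.
have [g hg] := choice stepex.
pose fix ar n := if n is n'.+1 then g (n', ar n') else ((0 : H), (1 : R)).
pose a n := (ar n).1; pose r n := (ar n).2.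
have rpos : forall n, 0 < r n.
  by elim => [|n IH]; [exact: ltr01 | have [] := hg (n, ar n) IH].
have hstep n : [/\ 0 < r n.+1, r n.+1 <= n.+1%:R^-1,
    nR (a n - a n.+1) + r n.+1 <= r n &
    forall z, nR (a n.+1 - z) <= r n.+1 -> ~ F n z] := hg (n, ar n) (rpos n).
have nest n m : (n <= m)%N -> nR (a n - a m) + r m <= r n.
  elim: m => [|m IH]; first by rewrite leqn0 => /eqP ->; rewrite subrr nR0 add0r.
  rewrite leq_eqVlt ltnS => /orP [/eqP ->|/IH h]; first by rewrite subrr nR0 add0r.
  have [_ _ h2 _] := hstep m.
  have := nR_tri (a n - a m) (a m - a m.+1); rewrite addrA subrK => h3.
  lra.
have hcau : forall e : C, 0 < e ->
    exists N, forall n, (N <= n)%N -> `|a N - a n| < e.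
  move=> e /Cpos [er [er0 ->]].
  have b0 : 0 <= er^-1 by rewrite invr_ge0 ltW.
  have hb := archi_boundP b0.
  set M := Num.Def.archi_bound _ in hb.
  exists M.+1 => n Mn; rewrite normE ltcR.
  have h1 := nest _ _ Mn.
  have [_ h2 _ _] := hstep M.
  have h4 := rpos n.
  have h5 : M.+1%:R^-1 < er.
    rewrite -[er]invrK ltf_pV2 ?posrE ?invr_gt0 ?ltr0Sn //.
    by apply: (lt_trans hb); rewrite ltr_nat.
  move: h1 h2 h4 h5; clear; set t := M.+1%:R^-1; move: t => t; lra.
have [l hl] := cauchy_seq hcau.
have inball n : nR (a n - l) <= r n.
  apply/ler_addgt0Pr => eps eps0.
  have e0 : 0 < eps%:C by move: (ltcR 0 eps); rewrite eps0 => h; exact: h.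
  have [N hN] := hl _ e0.
  have h1 := nest n (maxn n N) (leq_maxl _ _).
  have h2 : nR (l - a (maxn n N)) < eps.
    by rewrite -ltcR -normE; apply: hN; exact: leq_maxr.
  have h3 := rpos (maxn n N).
  have := nR_tri (a n - a (maxn n N)) (a (maxn n N) - l).
  rewrite addrA subrK (nR_sym (a (maxn n N)) l) => h4.
  lra.
have [k Fk] := cov l.
have [_ _ _ h] := hstep k.
exact: (h l (inball k.+1) Fk).
Qed.

Definition isproj (S : set H) (P : H -> H) :=
  forall x, S (P x) /\ forall s, S s -> ip (x - P x) s = 0.

Lemma proj_fun S : subsp S -> exists P, isproj S P.
Proof. by move=> sS; have [P hP] := choice (proj_ex sS); exists P. Qed.

Lemma subspB S a b : subsp S -> S a -> S b -> S (a - b).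
Proof. by case=> _ _ SD SZ Sa Sb; apply: SD => //; rewrite -scaleN1r; apply: SZ. Qed.

Lemma proj_uniq S P x q : subsp S -> isproj S P -> S q ->
  (forall s, S s -> ip (x - q) s = 0) -> q = P x.
Proof.
move=> sS hP Sq hq; have [SPx hPx] := hP x.
set d := P x - q.
have Sd : S d by apply: subspB.
have e : d = (x - q) - (x - P x) by rewrite opprB addrC addrA subrK.
apply/eqP; rewrite eq_sym -subr_eq0 -/d; apply/eqP/ipxx_eq0.
by rewrite {1}e ipBl hq // hPx // subrr.
Qed.

Lemma proj_id S P x : subsp S -> isproj S P -> S x -> P x = x.
Proof. by move=> sS hP Sx; symmetry; apply: (proj_uniq sS hP Sx) => s _; rewrite subrr ip0l. Qed.

Lemma proj_sa S P x y : isproj S P -> ip (P x) y = ip x (P y).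
Proof.
move=> hP; have [SPx hPx] := hP x; have [SPy hPy] := hP y.
have e1 : ip (P x) y = ip (P x) (P y) + ip (P x) (y - P y).
  by rewrite ipBr addrC subrK.
have e2 : ip x (P y) = ip (P x) (P y) + ip (x - P x) (P y).
  by rewrite ipBl addrC subrK.
by rewrite e1 e2 hPx // [ip (P x) (y - P y)]ipc hPy // conjC0.
Qed.

Lemma proj_D S P x y : subsp S -> isproj S P -> P (x + y) = P x + P y.
Proof.
move=> sS hP; have [SPx hPx] := hP x; have [SPy hPy] := hP y.
symmetry; apply: (proj_uniq sS hP); first by case: sS => _ _ SD _; apply: SD.
by move=> s Ss; rewrite opprD addrACA ipDl hPx // hPy // addr0.
Qed.

Lemma proj_Z S P (c : C) x : subsp S -> isproj S P -> P (c *: x) = c *: P x.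
Proof.
move=> sS hP; have [SPx hPx] := hP x.
symmetry; apply: (proj_uniq sS hP); first by case: sS => _ _ _ SZ; apply: SZ.
by move=> s Ss; rewrite -scalerBr ipZl hPx // mulr0.
Qed.

Lemma proj_B S P x y : subsp S -> isproj S P -> P (x - y) = P x - P y.
Proof.
by move=> sS hP; rewrite (proj_D _ _ sS hP) -scaleN1r (proj_Z _ _ sS hP) scaleN1r.
Qed.

Lemma proj_0 S P : subsp S -> isproj S P -> P 0 = 0.
Proof. by move=> sS hP; apply: proj_id => //; case: sS. Qed.

Definition nC (c : C) : R := complex.Re `|c|.
Lemma normCE c : `|c| = (nC c)%:C.
Proof. by rewrite RRe_real // normr_real. Qed.
Lemma nC_ge0 c : 0 <= nC c.
Proof. by rewrite -lecR -normCE; exact: normr_ge0. Qed.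
Lemma nC_tri a b : nC (a + b) <= nC a + nC b.
Proof. by rewrite -lecR rmorphD /= -!normCE ler_normD. Qed.
Lemma nC_CS x y : nC (ip x y) <= nR x * nR y.
Proof. by rewrite -lecR rmorphM !normE' -normCE; exact: CS. Qed.

Lemma ker_subsp A : bounded_op A -> subsp [set x | A x = 0].
Proof.
case=> AD AZ Ac; have [M [M0 hM]] := cont_bound AD AZ Ac.
have A0 := addf0 AD; have AB := addfB AD.
split; rewrite /=.
- apply: closedP => l hl; apply/eqP/negPn/negP => fl.
  have e0 : 0 < `|A l| / M by rewrite divr_gt0 // normr_gt0.
  have [s [fs ls]] := hl _ e0.
  have : `|A l| < `|A l| .
    rewrite -{1}[A l]subr0 -fs -AB; apply: (le_lt_trans (hM _)).
    by rewrite -ltr_pdivlMl // mulrC.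
  by rewrite ltxx.
- exact: A0.
- by move=> a b fa fb; rewrite AD fa fb addr0.
- by move=> c a fa; rewrite AZ fa scaler0.
Qed.

Lemma range_subsp A : bounded_op A -> closed_range A -> subsp (range A).
Proof.
case=> AD AZ Ac cA; split => //.
- by exists 0 => //; exact: addf0.
- by move=> _ _ [a _ <-] [b _ <-]; exists (a + b) => //; rewrite AD.
- by move=> c _ [a _ <-]; exists (c *: a) => //; rewrite AZ.
Qed.

Lemma nC_real (t : R) : 0 <= t -> nC t%:C = t.
Proof.
move=> t0; rewrite /nC normc_def /= expr0n /= addr0 sqrtr_sqr ger0_norm //.
Qed.
Lemma nCM a b : nC (a * b) = nC a * nC b.
Proof. by apply: complexI; rewrite rmorphM /= -!normCE normrM. Qed.
Lemma nCN a : nC (- a) = nC a.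
Proof. by rewrite /nC normrN. Qed.
Lemma nC0 : nC 0 = 0.
Proof. by rewrite /nC normr0. Qed.
Lemma nC_ipxx u : nC (ip u u) = nR u ^+ 2.
Proof. by apply: complexI; rewrite rmorphXn normE' -normCE ipn normrX normr_id. Qed.
Lemma nRN v : nR (- v) = nR v.
Proof. by rewrite /nR normrN. Qed.
Lemma Cpos' (t : R) : 0 < t -> 0 < t%:C.
Proof. by move=> t0; move: (ltcR 0 t); rewrite t0 => h; exact: h. Qed.

Lemma le_of_eps (a b : R) : (forall e : R, 0 < e -> a <= b + e) -> a <= b.
Proof. by move=> h; apply/ler_addgt0Pr. Qed.

Lemma td_bound T Ts PM Td : bounded_op T ->
  (forall x y, ip (T x) y = ip x (Ts y)) -> bounded_op Ts ->
  subsp (range T) -> isproj (range T) PM ->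
  (forall y, (forall s, T s = 0 -> ip (Td y) s = 0) /\ T (Td y) = PM y) ->
  exists Cst : C, 0 < Cst /\ forall y, `|Td y| <= Cst * `|y|.
Proof.
move=> hT adjT hTs sM hPM hTd.
have [TD TZ Tc] := hT; have [TsD TsZ Tsc] := hTs.
have T0 := addf0 TD; have TB := addfB TD; have Ts0 := addf0 TsD.
pose G (k : nat) := [set y | forall w, nC (ip (PM y) w) <= k%:R * nR (Ts w)].
have cG k : closed (G k).
  apply: closedP => l hl w.
  apply/ler_addgt0Pr => eps eps0.
  set q := nR (PM w) + 1.
  have q0 : 0 < q by rewrite /q ltr_wpDl // nR_ge0.
  have [s [Gs ls]] := hl _ (Cpos' (divr_gt0 eps0 q0)).
  rewrite normE ltcR in ls.
  have e1 : ip (PM l) w = ip (PM s) w + ip (l - s) (PM w).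
    by rewrite -(proj_sa _ _ hPM) (proj_B _ _ sM hPM) ipBl addrC subrK.
  have h1 := nC_tri (ip (PM s) w) (ip (l - s) (PM w)).
  rewrite -e1 in h1.
  have h2 := nC_CS (l - s) (PM w).
  have h3 := Gs w.
  have h4 := nR_ge0 (l - s).
  have h5 : eps / q * q = eps by rewrite divfK // lt0r_neq0.
  move: h1 h2 h3 h4 h5 ls; rewrite /q; set t := eps / _; move: t => t.
  have := nR_ge0 (PM w); nra.
have cov y : exists k, G k y.
  have [[x _ hx] _] := hPM y.
  have hb := archi_boundP (nR_ge0 x).
  exists (Num.Def.archi_bound (nR x)) => w.
  rewrite -hx adjT.
  apply: (le_trans (nC_CS _ _)); apply: ler_wpM2r; [exact: nR_ge0 | exact: ltW].
have [k [y0 [r [r0 hb]]]] := baire cG cov.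
set Cr := 4 * k%:R / r.
have Cr0 : 0 <= Cr by rewrite /Cr divr_ge0 // ?mulr_ge0 // ltW.
have key z w : nC (ip (PM z) w) <= Cr * nR z * nR (Ts w).
  have [->|z0] := eqVneq z 0.
    by rewrite (proj_0 sM hPM) ip0l nC0 nR0 mulr0 mul0r.
  have nz : 0 < nR z by rewrite lt0r nR_ge0 andbT; apply/eqP => /nR_eq0 /eqP; apply/negP.
  set t := r / (2 * nR z).
  have t0 : 0 < t by rewrite /t divr_gt0 // mulr_gt0.
  have tz : t * nR z = r / 2 by rewrite /t; field; rewrite lt0r_neq0.
  have nz' : nR (t%:C *: z) = r / 2 by rewrite nRZ -/(nC _) nC_real ?ltW.
  have G1 : G k (y0 + t%:C *: z).
    by apply: hb; rewrite opprD addrA subrr sub0r nRN nz'; lra.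
  have G2 : G k y0 by apply: hb; rewrite subrr nR0.
  have e : ip (PM (t%:C *: z)) w = ip (PM (y0 + t%:C *: z)) w - ip (PM y0) w.
    by rewrite (proj_D _ _ sM hPM) ipDl addrC addKr.
  have h1 := nC_tri (ip (PM (y0 + t%:C *: z)) w) (- ip (PM y0) w).
  rewrite -e nCN (proj_Z _ _ sM hPM) ipZl nCM (nC_real (ltW t0)) in h1.
  have h2 := G1 w; have h3 := G2 w.
  have h4 : Cr * r = 4 * k%:R by rewrite /Cr divfK // lt0r_neq0.
  have h5 := nC_ge0 (ip (PM z) w).
  have h6 := nR_ge0 (Ts w).
  set X := nC (ip (PM z) w) in h1 h5 *.
  set A := nC (ip (PM (y0 + t%:C *: z)) w) in h1 h2.
  set B := nC (ip (PM y0) w) in h1 h3.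
  set W := nR (Ts w) in h2 h3 h6 *.
  set Z := nR z in tz nz *.
  move: X A B W Z h1 h2 h3 h5 h6 tz nz h4 => X A B W Z h1 h2 h3 h5 h6 tz nz h4.
  have s1 : t * X <= 2 * k%:R * W by lra.
  have rr : r = 2 * (t * Z) by rewrite tz; field.
  have s2 : X * r <= 4 * k%:R * W * Z by rewrite rr; nra.
  rewrite -(ler_pM2r r0); nra.
pose S' := [set v | forall e : C, 0 < e -> exists w, `|v - Ts w| < e].
have sS' : subsp S'.
  split.
  - apply: closedP => l hl e /Cpos [er [er0 ->]].
    have er2 : 0 < er / 2 by rewrite divr_gt0.
    have [v [S'v lv]] := hl _ (Cpos' er2).
    have [w hw] := S'v _ (Cpos' er2).
    exists w; rewrite normE ltcR; rewrite normE ltcR in lv; rewrite normE ltcR in hw.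
    have := nR_tri (l - v) (v - Ts w); rewrite addrA subrK; lra.
  - by move=> e e0; exists 0; rewrite Ts0 subrr normr0.
  - move=> a b Sa Sb e /Cpos [er [er0 ->]].
    have er2 : 0 < er / 2 by rewrite divr_gt0.
    have [w1 h1] := Sa _ (Cpos' er2); have [w2 h2] := Sb _ (Cpos' er2).
    exists (w1 + w2); rewrite TsD normE ltcR; rewrite normE ltcR in h1; rewrite normE ltcR in h2.
    have := nR_tri (a - Ts w1) (b - Ts w2).
    rewrite (_ : a - Ts w1 + (b - Ts w2) = a + b - (Ts w1 + Ts w2)); first lra.
    by rewrite opprD addrACA.
  - move=> c a Sa e /Cpos [er [er0 ->]].
    set q := nC c + 1.
    have q0 : 0 < q by rewrite /q ltr_wpDl // nC_ge0.
    have [w h] := Sa _ (Cpos' (divr_gt0 er0 q0)).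
    exists (c *: w); rewrite TsZ -scalerBr normE ltcR nRZ -/(nC c).
    rewrite normE ltcR in h.
    have h5 : er / q * q = er by rewrite divfK // lt0r_neq0.
    have := nC_ge0 c; have := nR_ge0 (a - Ts w).
    move: h h5; rewrite /q; set t := er / _; move: t => t; nra.
have inS' w : S' (Ts w) by move=> e e0; exists w; rewrite subrr normr0.
have uS' y : S' (Td y).
  have [p [S'p hp]] := proj_ex sS' (Td y).
  have hN : T (Td y - p) = 0.
    by apply: nondegl => w; rewrite ip0l adjT; exact: hp _ (inS' w).
  have h1 : ip (Td y) (Td y - p) = 0 := (proj1 (hTd y)) _ hN.
  have h2 : ip p (Td y - p) = 0 by rewrite ipc hp // conjC0.
  have : Td y - p = 0 by apply: ipxx_eq0; rewrite ipBl h1 h2 subrr.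
  by move/eqP; rewrite subr_eq0 => /eqP ->.
have bnd y : nR (Td y) <= Cr * nR y.
  have hw w : nC (ip (Td y) (Ts w)) <= Cr * nR y * nR (Ts w).
    by rewrite -adjT (proj2 (hTd y)) key.
  set u := Td y in hw *.
  have sq : nR u ^+ 2 <= Cr * nR y * nR u.
    apply: le_of_eps => eps eps0.
    set q := Cr * nR y + nR u + 1.
    have q0 : 0 < q.
      by rewrite /q ltr_wpDl // addr_ge0 ?nR_ge0 // mulr_ge0 // nR_ge0.
    have [w hw'] := uS' y _ (Cpos' (divr_gt0 eps0 q0)).
    rewrite normE ltcR in hw'.
    have e1 : ip u u = ip u (Ts w) + ip u (u - Ts w) by rewrite ipBr addrC subrK.
    have h1 := nC_tri (ip u (Ts w)) (ip u (u - Ts w)); rewrite -e1 nC_ipxx in h1.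
    have h2 := hw w.
    have h3 := nC_CS u (u - Ts w).
    have h4 : nR (Ts w) <= nR u + nR (u - Ts w).
      by have := nR_tri u (Ts w - u); rewrite addrC subrK (nR_sym (Ts w)).
    have h5 : eps / q * q = eps by rewrite divfK // lt0r_neq0.
    have h6 := nR_ge0 u; have h7 := nR_ge0 y; have h8 := nR_ge0 (u - Ts w).
    have h9 := nR_ge0 (Ts w).
    move: h1 h2 h3 h4 h5 hw' q0; rewrite /q; set t := eps / _; move: t => t.
    set U := nR u; set D := nR (u - Ts w); set W := nR (Ts w); set Y := nR y.
    move=> h1 h2 h3 h4 h5 hw' q0.
    have CY0 : 0 <= Cr * Y by rewrite mulr_ge0.
    have s1 : Cr * Y * W <= Cr * Y * (U + D) by rewrite ler_wpM2l.
    have s2 : D * (Cr * Y + U) <= t * (Cr * Y + U).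
      by rewrite ler_wpM2r ?addr_ge0 // ltW.
    have t0 : 0 <= t by apply: le_trans (ltW hw').
    clearbody U D W Y.
    lra.
  have CY0 : 0 <= Cr * nR y by rewrite mulr_ge0 // nR_ge0.
  case: (lerP (nR u) (Cr * nR y)) => // h.
  have h0 : 0 < nR u by lra.
  move: sq CY0 h h0; move: (nR u) (Cr * nR y) => a b; clear -a b.
  move=> *; exfalso; nra.
have Cp : 0 < (Cr + 1)%:C by apply: Cpos'; lra.
exists (Cr + 1)%:C; split; first exact: Cp.
move=> y.
have h : (nR (Td y))%:C <= ((Cr + 1) * nR y)%:C by rewrite lecR; have := bnd y; have := nR_ge0 y; nra.
by rewrite rmorphM normE' -normE in h; exact: h.
Qed.

Lemma mp_ex T : bounded_op T -> closed_range T -> exists Td, is_MP_inverse ip T Td.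
Proof.
move=> hT cT.
have [TD TZ Tc] := hT.
have T0 := addf0 TD; have TB := addfB TD.
have [Ts [hTs adjT]] := adj_ex hT.
have [TsD TsZ Tsc] := hTs.
pose N := [set x | T x = 0].
have sN : subsp N := ker_subsp hT.
have sM := range_subsp hT cT.
have [PN hPN] := proj_fun sN.
have [PM hPM] := proj_fun sM.
have hex y : exists u, (forall s, N s -> ip u s = 0) /\ T u = PM y.
  have [[x _ hx] _] := hPM y.
  exists (x - PN x); split; first by move=> s Ns; have [_ h] := hPN x; exact: h.
  by rewrite TB (proj1 (hPN x)) subr0.
have [Td hTd] := choice hex.
have uniq y u : (forall s, N s -> ip u s = 0) -> T u = PM y -> u = Td y.
  move=> hu Tu; have [h1 h2] := hTd y.
  apply/eqP; rewrite -subr_eq0; apply/eqP/ipxx_eq0.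
  have Nd : N (u - Td y) by rewrite /N /= TB Tu h2 subrr.
  by rewrite ipBl hu // h1 // subrr.
have TdD y1 y2 : Td (y1 + y2) = Td y1 + Td y2.
  symmetry; apply: uniq.
    by move=> s Ns; rewrite ipDl (proj1 (hTd y1)) // (proj1 (hTd y2)) // addr0.
  by rewrite TD (proj2 (hTd y1)) (proj2 (hTd y2)) (proj_D _ _ sM hPM).
have TdZ (c : C) y : Td (c *: y) = c *: Td y.
  symmetry; apply: uniq; first by move=> s Ns; rewrite ipZl (proj1 (hTd y)) // mulr0.
  by rewrite TZ (proj2 (hTd y)) (proj_Z _ _ sM hPM).
have TTd y : T (Td y) = PM y := proj2 (hTd y).
have PMT x : PM (T x) = T x.
  by apply: (proj_id sM hPM); exists x.
have TdT x : Td (T x) = x - PN x.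
  symmetry; apply: uniq; first by move=> s Ns; have [_ h] := hPN x; exact: h.
  by rewrite TB (proj1 (hPN x)) subr0 PMT.
have hbound : exists Cst : C, 0 < Cst /\ forall y, `|Td y| <= Cst * `|y|.
  exact: (td_bound hT adjT hTs sM hPM hTd).
have [Cst [C0 hC]] := hbound.
exists Td; split.
- by split => //; exact: (bound_cont C0 TdD hC).
- by apply: funext => x /=; rewrite TdT TB (proj1 (hPN x)) subr0.
- apply: funext => y /=; rewrite TTd; symmetry; apply: uniq.
    exact: (proj1 (hTd y)).
  by rewrite TTd (proj_id sM hPM (proj1 (hPM y))).
- move=> x y /=; rewrite !TdT ipBl ipBr; congr (_ - _); exact: (proj_sa _ _ hPN).
- by move=> x y /=; rewrite !TTd; exact: (proj_sa _ _ hPM).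
Qed.

Definition adjr (A B : H -> H) := forall x y, ip (A x) y = ip x (B y).

Lemma adj_uniq A B B' : adjr A B -> adjr A B' -> B = B'.
Proof.
by move=> h h'; apply: funext => y; apply: nondeg => x; rewrite -h h'.
Qed.

Lemma adj_sym A B : adjr A B -> adjr B A.
Proof. by move=> h x y; rewrite ipc -h -ipc. Qed.

Lemma adj_comp A A' B B' : adjr A A' -> adjr B B' -> adjr (A \o B) (B' \o A').
Proof. by move=> hA hB x y /=; rewrite hA hB. Qed.

Lemma adj_iter A A' n : adjr A A' -> adjr (iter n A) (iter n A').
Proof.
move=> hA; elim: n => [|n IH] x y //=.
by rewrite hA IH -iterSr.
Qed.

Lemma adj_eq A A' B B' : adjr A A' -> adjr B B' -> A = B -> A' = B'.
Proof. by move=> hA hB e; apply: adj_uniq hB; rewrite -e. Qed.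

Lemma bounded_iter (A : H -> H) n : bounded_op A -> bounded_op (iter n A).
Proof.
case=> AD AZ Ac; elim: n => [|n [ID IZ Ic]]; first by split => // x; exact: cvg_id.
split => /=.
- by move=> x y; rewrite ID AD.
- by move=> a x; rewrite IZ AZ.
- by move=> x; apply: continuous_comp; [exact: Ic | exact: Ac].
Qed.

Lemma iter_comm (A B : H -> H) n : A \o B = B \o A -> forall x, iter n A (B x) = B (iter n A x).
Proof.
move=> e; elim: n => [|n IH] x //=.
by rewrite IH; exact: (congr1 (fun f => f _) e).
Qed.

Lemma range_sub A A' Ad Ad' n : (0 < n)%N ->
  adjr A A' -> adjr Ad Ad' ->
  A \o Ad \o A = A -> Ad \o A \o Ad = Ad -> self_adjoint ip (Ad \o A) ->
  iter n A \o Ad = Ad \o iter n A -> A' \o Ad = Ad \o A' ->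
  range (iter n A) `<=` range (iter n A').
Proof.
move=> n0 hA hAd e1 e2 sa c1 c2.
have E1 x : A (Ad (A x)) = A x := congr1 (fun f => f x) e1.
have E2 x : Ad (A (Ad x)) = Ad x := congr1 (fun f => f x) e2.
have i1 y : Ad y = A' (Ad' (Ad y)).
  apply: nondeg => x; rewrite -[Ad y in LHS]E2.
  by have := sa x (Ad y); rewrite /= => <-; rewrite hAd hA.
have i2 k y : exists w, iter k Ad y = iter k A' w.
  elim: k y => [|k IH] y; first by exists y.
  have [w hw] := IH y.
  exists (Ad' (Ad w)).
  rewrite iterS hw -(iter_comm k c2) iterSr; congr (iter k A' _).
  exact: i1.
have i4 v : iter n A v = Ad (iter n A (A v)).
  have : iter n A v = iter n A (Ad (A v)).
    have [m hm] : exists m, n = m.+1 by case: (n) n0 => // m _; exists m.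
    by rewrite hm !iterSr E1.
  move=> ->; exact: (congr1 (fun f => f (A v)) c1).
have i3 k x : iter n A x = iter k Ad (iter n A (iter k A x)).
  elim: k x => [|k IH] x //.
  by rewrite IH i4 -iterSr -iterS.
move=> _ [x _ <-].
have [w hw] := i2 n (iter n A (iter n A x)).
by exists w => //; rewrite (i3 n x) hw.
Qed.

Lemma part1 T Td B n : (0 < n)%N -> bounded_op T -> is_MP_inverse ip T Td ->
  adjr (iter n T) B -> range (iter n T) = range B ->
  iter n T \o Td = Td \o iter n T.
Proof.
move=> n0 hT [hTd e1 e2 sa1 sa2] hB hR.
have [TnD _ _] := bounded_iter n hT.
have TnB := addfB TnD.
have E1 x : T (Td (T x)) = T x := congr1 (fun f => f x) e1.
have [m hm] : exists m, n = m.+1 by case: (n) n0 => // m _; exists m.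
have TnQ x : iter n T (Td (T x)) = iter n T x by rewrite hm !iterSr E1.
have QB y : Td (T (B y)) = B y.
  apply: nondeg => x; have := sa1 x (B y); rewrite /= => <-.
  by rewrite -!hB TnQ.
have a x : Td (T (iter n T x)) = iter n T x.
  have : range B (iter n T x) by rewrite -hR; exists x.
  by case=> z _ <-; exact: QB.
have b y : iter n T y = iter n T (T (Td y)).
  apply/eqP; rewrite -subr_eq0 -TnB; apply/eqP.
  apply: nondegl => z; rewrite ip0l hB.
  have : range (iter n T) (B z) by rewrite hR; exists z.
  case=> v _ <-; rewrite hm iterS ipBl.
  by have := sa2 y (T (iter m T v)); rewrite /= => ->; rewrite E1 subrr.
apply: funext => x /=.
by rewrite [in RHS]b -iterSr iterS a.
Qed.

Lemma main_sec T n : bounded_op T -> closed_range T -> (1 <= n)%N ->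
  closed_range (iter n T) ->
  (EP ip (iter n T) -> nEP ip n T) /\
  (SD ip T -> (nEP ip n T <-> EP ip (iter n T))).
Proof.
move=> hT cT n1 cTn.
have p1 : EP ip (iter n T) -> nEP ip n T.
  case=> _ hEP; split => // Td hTd.
  have [B [hBb hB]] := adj_ex (bounded_iter n hT).
  exact: (part1 n1 hT hTd hB (hEP B (conj hBb hB))).
split => //; case=> _ hSD; split => // -[_ hn].
split => // B [hBb hB].
have [Td hTd] := mp_ex hT cT.
have [Ts [hTsb hTs]] := adj_ex hT.
have hTd' := hTd; case: hTd' => hTdb e1 e2 sa1 sa2.
have [Tds [_ hTds]] := adj_ex hTdb.
have c1 := hn Td hTd.
have c2 := hSD Ts Td (conj hTsb hTs) hTd.
have eB : B = iter n Ts := adj_uniq hB (adj_iter n hTs).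
rewrite eB; apply/seteqP; split.
  exact: (range_sub n1 hTs hTds e1 e2 sa1 c1 c2).
have f1 : Ts \o Tds \o Ts = Ts := adj_eq (adj_comp (adj_comp hTs hTds) hTs) hTs e1.
have f2 : Tds \o Ts \o Tds = Tds :=
  adj_eq (adj_comp (adj_comp hTds hTs) hTds) hTds e2.
have f3 : self_adjoint ip (Tds \o Ts).
  by rewrite (adj_uniq (adj_comp hTs hTds) sa2).
have f4 : iter n Ts \o Tds = Tds \o iter n Ts.
  symmetry; exact: (adj_eq (adj_comp (adj_iter n hTs) hTds)
                          (adj_comp hTds (adj_iter n hTs)) c1).
have f5 : T \o Tds = Tds \o T.
  symmetry; exact: (adj_eq (adj_comp (adj_sym hTs) hTds)
                          (adj_comp hTds (adj_sym hTs)) c2).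
exact: (range_sub n1 (adj_sym hTs) (adj_sym hTds) f1 f2 f3 f4 f5).
Qed.

End IP.

Unset Implicit Arguments.

Theorem mainTheorem8 (R : realType) (H : completeNormedModType R[i])
  (ip : H -> H -> R[i]) (T : H -> H) (n : nat) :
  is_inner_product ip -> bounded_op T -> closed_range T ->
  (1 <= n)%N -> closed_range (iter n T) ->
  (EP ip (iter n T) -> nEP ip n T) /\
  (SD ip T -> (nEP ip n T <-> EP ip (iter n T))).
Proof.
move=> hip; exact: (main_sec hip).
Qed.
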